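(* Let $(V,\|\cdot\|)$ be a normed plane with unit circle $S$. The norm is derived from an inner product if and only if for every $x\in S$ and every $y\in S$ with $y\dashv_B x$ (i.e. $y$ is a point of $S$ at which the direction $x$ supports the unit ball), the segment $[(-y)y]$ is contained in $\mathrm{bis}(-x,x)$.
   Context: A normed (Minkowski) plane $(V,\|\cdot\|)$ is a two-dimensional real vector space with a norm; $B$ is its unit ball and $S=\{v:\|v\|=1\}$ its unit circle. For distinct $x,y$, $\mathrm{bis}(x,y)=\{z\in V:\|z-x\|=\|z-y\|\}$. For nonzero $x,y\in V$, $x$ is Birkhoff orthogonal to $y$, written $x\dashv_B y$, if $\|x+ty\|\ge\|x\|$ for all $t\in\mathbb{R}$. *)

(* Defs.v *)
From Stdlib Require Import Reals.
Open Scope R_scope.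

(* The plane: every 2-dimensional real vector space is linearly isomorphic
   to R^2, so we take V = R * R with its standard vector operations. *)
Definition V : Type := (R * R)%type.
Definition vadd (u v : V) : V := (fst u + fst v, snd u + snd v).
Definition vscal (t : R) (v : V) : V := (t * fst v, t * snd v).
Definition vopp (v : V) : V := vscal (-1) v.
Definition vzero : V := (0, 0).

Record is_norm (N : V -> R) : Prop := {
  norm_nonneg : forall v, 0 <= N v;
  norm_zero : forall v, N v = 0 <-> v = vzero;
  norm_hom : forall (t : R) v, N (vscal t v) = Rabs t * N v;
  norm_triangle : forall u v, N (vadd u v) <= N u + N v
}.

Record is_inner_product (B : V -> V -> R) : Prop := {
  ip_sym : forall u v, B u v = B v u;
  ip_add_l : forall u v w, B (vadd u v) w = B u w + B v w;
  ip_scal_l : forall (t : R) u w, B (vscal t u) w = t * B u w;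
  ip_pos : forall v, v <> vzero -> 0 < B v v
}.

Definition norm_from_inner_product (N : V -> R) : Prop :=
  exists B, is_inner_product B /\ forall v, N v = sqrt (B v v).

Definition unit_circle (N : V -> R) (v : V) : Prop := N v = 1.

Definition birkhoff_orth (N : V -> R) (x y : V) : Prop :=
  forall t : R, N x <= N (vadd x (vscal t y)).

Definition bisector (N : V -> R) (x y z : V) : Prop :=
  N (vadd z (vopp x)) = N (vadd z (vopp y)).

Definition in_segment (a b z : V) : Prop :=
  exists s : R, 0 <= s <= 1 /\ z = vadd (vscal (1 - s) a) (vscal s b).

(* Main.v *)
Require Import Defs.
From Stdlib Require Import Reals Lra Lia Psatz Classical.
Open Scope R_scope.

Lemma veq (u v : V) : fst u = fst v -> snd u = snd v -> u = v.
Proof. destruct u, v; simpl; intros; subst; reflexivity. Qed.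

Ltac vsimp := unfold vadd, vscal, vopp, vzero in *; simpl in *.
Ltac veqt := apply veq; vsimp; try ring.

Lemma nscal (N : V -> R) (HN : is_norm N) t v : N (vscal t v) = Rabs t * N v.
Proof. apply (norm_hom _ HN). Qed.

Lemma nnn (N : V -> R) (HN : is_norm N) v : 0 <= N v.
Proof. apply (norm_nonneg _ HN). Qed.

Lemma ntri (N : V -> R) (HN : is_norm N) u v : N (vadd u v) <= N u + N v.
Proof. apply (norm_triangle _ HN). Qed.

Lemma nopp (N : V -> R) (HN : is_norm N) v : N (vopp v) = N v.
Proof. unfold vopp. rewrite (nscal N HN). replace (Rabs (-1)) with 1 by (rewrite Rabs_left; lra). ring. Qed.

Lemma nzero (N : V -> R) (HN : is_norm N) : N vzero = 0.
Proof. apply (norm_zero _ HN). reflexivity. Qed.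

Lemma npos (N : V -> R) (HN : is_norm N) v : v <> vzero -> 0 < N v.
Proof. intro H. destruct (nnn N HN v) as [h|h]; auto.
 exfalso. apply H. apply (norm_zero _ HN). auto. Qed.

Lemma line_convex (N : V -> R) (HN : is_norm N) p d a b l :
  0 <= l <= 1 ->
  N (vadd p (vscal (l*a + (1-l)*b) d)) <=
  l * N (vadd p (vscal a d)) + (1-l) * N (vadd p (vscal b d)).
Proof.
 intros Hl.
 replace (vadd p (vscal (l*a + (1-l)*b) d)) with
   (vadd (vscal l (vadd p (vscal a d))) (vscal (1-l) (vadd p (vscal b d)))) by veqt.
 eapply Rle_trans. apply (ntri N HN).
 rewrite !(nscal N HN). rewrite !Rabs_pos_eq by lra. lra.
Qed.

Lemma rev_tri (N : V -> R) (HN : is_norm N) u v : N u - N v <= N (vadd u v).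
Proof.
 assert (H := ntri N HN (vadd u v) (vopp v)).
 replace (vadd (vadd u v) (vopp v)) with u in H by veqt.
 rewrite (nopp N HN) in H. lra.
Qed.

Lemma Rabs_le_inv (a b : R) : Rabs a <= b -> -b <= a <= b.
Proof. unfold Rabs; destruct (Rcase_abs a); lra. Qed.

Definition conv (g : R -> R) := forall a b l, 0 <= l <= 1 ->
  g (l*a + (1-l)*b) <= l * g a + (1-l) * g b.

Lemma line_conv (N : V -> R) (HN : is_norm N) p d :
  conv (fun s => N (vadd p (vscal s d))).
Proof. intros a b l Hl. apply (line_convex N HN p d a b l Hl). Qed.

Lemma conv_at g a b l c : conv g -> 0 <= l <= 1 -> c = l*a + (1-l)*b ->
  g c <= l * g a + (1-l) * g b.
Proof. intros H Hl ->. apply H; auto. Qed.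

Lemma even_min g : conv g -> (forall c, -1<=c<=1 -> g c = g (-c)) ->
  forall t, g 0 <= g t.
Proof.
 intros Hc He t.
 assert (H0 : forall c, -1 <= c <= 1 -> g 0 <= g c).
 { intros c Hc'. assert (E := conv_at g c (-c) (1/2) 0 Hc ltac:(lra) ltac:(field)).
   rewrite <- (He c Hc') in E. lra. }
 destruct (Rle_dec (-1) t) as [h1|h1]; [destruct (Rle_dec t 1) as [h2|h2]|].
 - apply H0; lra.
 - assert (Hl : 0 <= 1/t <= 1).
   { split. apply Rlt_le, Rdiv_lt_0_compat; lra.
     apply Rmult_le_reg_r with t; [lra|]. unfold Rdiv. rewrite Rmult_assoc, Rinv_l; lra. }
   assert (E := conv_at g t 0 (1/t) 1 Hc Hl ltac:(field; lra)).
   assert (H1 := H0 1 ltac:(lra)).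
   assert (0 < 1/t) by (apply Rdiv_lt_0_compat; lra).
   apply Rmult_le_reg_l with (1/t); lra.
 - assert (Hl : 0 <= 1/(-t) <= 1).
   { split. apply Rlt_le, Rdiv_lt_0_compat; lra.
     apply Rmult_le_reg_r with (-t); [lra|]. unfold Rdiv. rewrite Rmult_assoc, Rinv_l; lra. }
   assert (E := conv_at g t 0 (1/(-t)) (-1) Hc Hl ltac:(field; lra)).
   assert (H1 := H0 (-1) ltac:(lra)).
   assert (0 < 1/(-t)) by (apply Rdiv_lt_0_compat; lra).
   apply Rmult_le_reg_l with (1/(-t)); lra.
Qed.

Definition Hyp (N : V -> R) := forall x y, N x = 1 -> N y = 1 -> birkhoff_orth N y x ->
  forall c, -1 <= c <= 1 -> N (vadd (vscal c y) x) = N (vadd (vscal c y) (vopp x)).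

Lemma Nvopp_eq (N : V -> R) (HN : is_norm N) u v : vopp u = v -> N u = N v.
Proof. intros <-. symmetry. apply (nopp N HN). Qed.

Lemma birk_sym (N : V -> R) (HN : is_norm N) (H : Hyp N) x y :
  N x = 1 -> N y = 1 -> birkhoff_orth N y x -> birkhoff_orth N x y.
Proof.
 intros Hx Hy Hb t.
 assert (E := even_min (fun s => N (vadd x (vscal s y))) (line_conv N HN x y)).
 simpl in E. replace (N x) with (N (vadd x (vscal 0 y))) by (f_equal; veqt).
 apply E. intros c Hc.
 rewrite <- (Nvopp_eq N HN (vadd (vscal c y) (vopp x)) (vadd x (vscal (- c) y))) by veqt.
 rewrite <- (H x y Hx Hy Hb c Hc). f_equal. veqt.
Qed.

Lemma birk_even (N : V -> R) (HN : is_norm N) (H : Hyp N) x y :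
  N x = 1 -> N y = 1 -> birkhoff_orth N y x -> forall a b,
  N (vadd (vscal a x) (vscal b y)) = N (vadd (vscal a x) (vscal (-b) y)).
Proof.
 intros Hx Hy Hb a b.
 assert (Hb2 := birk_sym N HN H x y Hx Hy Hb).
 destruct (Req_dec a 0) as [a0|a0].
 { subst a. apply (Nvopp_eq N HN). veqt. }
 destruct (Rle_dec (Rabs b) (Rabs a)) as [hab|hab].
 - assert (Hc : -1 <= -b/a <= 1).
   { assert (0 < Rabs a) by (apply Rabs_pos_lt; auto).
     rewrite <- Rabs_Ropp in hab. apply Rabs_le_inv. unfold Rdiv. rewrite Rabs_mult, Rabs_inv.
     apply Rmult_le_reg_r with (Rabs a); auto. rewrite Rmult_assoc, Rinv_l; lra. }
   assert (E := H x y Hx Hy Hb (-b/a) Hc).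
   replace (vadd (vscal a x) (vscal b y)) with (vscal (-a) (vadd (vscal (-b/a) y) (vopp x))) by (veqt; field; auto).
   replace (vadd (vscal a x) (vscal (-b) y)) with (vscal a (vadd (vscal (-b/a) y) x)) by (veqt; field; auto).
   rewrite !(nscal N HN), E, Rabs_Ropp. auto.
 - assert (b0 : b <> 0) by (intro; subst; rewrite Rabs_R0 in hab; apply hab, Rabs_pos).
   assert (Hc : -1 <= a/b <= 1).
   { assert (0 < Rabs b) by (apply Rabs_pos_lt; auto).
     apply Rabs_le_inv. unfold Rdiv. rewrite Rabs_mult, Rabs_inv.
     apply Rmult_le_reg_r with (Rabs b); auto. rewrite Rmult_assoc, Rinv_l; lra. }
   assert (E := H y x Hy Hx Hb2 (a/b) Hc).
   replace (vadd (vscal a x) (vscal b y)) with (vscal b (vadd (vscal (a/b) x) y)) by (veqt; field; auto).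
   replace (vadd (vscal a x) (vscal (-b) y)) with (vscal b (vadd (vscal (a/b) x) (vopp y))) by (veqt; field; auto).
   rewrite !(nscal N HN), E. auto.
Qed.

Lemma line_lip (N : V -> R) (HN : is_norm N) w x t s :
  Rabs (N (vadd w (vscal t x)) - N (vadd w (vscal s x))) <= Rabs (t - s) * N x.
Proof.
 assert (H1 := ntri N HN (vadd w (vscal s x)) (vscal (t-s) x)).
 assert (H2 := ntri N HN (vadd w (vscal t x)) (vscal (s-t) x)).
 replace (vadd (vadd w (vscal s x)) (vscal (t - s) x)) with (vadd w (vscal t x)) in H1 by veqt.
 replace (vadd (vadd w (vscal t x)) (vscal (s - t) x)) with (vadd w (vscal s x)) in H2 by veqt.
 rewrite (nscal N HN) in H1, H2. rewrite Rabs_minus_sym in H2.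
 apply Rabs_le. lra.
Qed.

Lemma line_cont (N : V -> R) (HN : is_norm N) w x c :
  continuity_pt (fun t => N (vadd w (vscal t x))) c.
Proof.
 unfold continuity_pt, continue_in, limit1_in, limit_in. intros eps Heps.
 assert (Hx := nnn N HN x).
 exists (eps / (N x + 1)). split.
 - apply Rdiv_lt_0_compat; lra.
 - intros y [_ Hy]. simpl in *. unfold R_dist in *.
   eapply Rle_lt_trans. apply line_lip; auto.
   apply Rle_lt_trans with (eps / (N x + 1) * N x).
   + apply Rmult_le_compat_r; lra.
   + apply Rlt_le_trans with (eps / (N x + 1) * (N x + 1)). 
     * apply Rmult_lt_compat_l. apply Rdiv_lt_0_compat; lra. lra.
     * right. field. lra.
Qed.

Lemma birk_exists (N : V -> R) (HN : is_norm N) x :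
  N x = 1 -> exists y, N y = 1 /\ birkhoff_orth N y x.
Proof.
 intros Hx.
 set (w := (- snd x, fst x) : V).
 set (g := fun t => N (vadd w (vscal t x))).
 set (T := 2 * N w).
 assert (HT : 0 <= T) by (unfold T; assert (h := nnn N HN w); lra).
 destruct (continuity_ab_min g (-T) T ltac:(lra) (fun c _ => line_cont N HN w x c)) as [t0 [Hmin Ht0]].
 assert (Hglob : forall t, g t0 <= g t).
 { intros t. destruct (Rle_dec (Rabs t) T) as [h|h].
   - apply Hmin. apply Rabs_le_inv; auto.
   - apply Rle_trans with (g 0). apply Hmin; lra.
     unfold g. replace (vadd w (vscal 0 x)) with w by veqt.
     assert (E := rev_tri N HN (vscal t x) w).
     replace (vadd (vscal t x) w) with (vadd w (vscal t x)) in E by veqt.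
     rewrite (nscal N HN), Hx in E. unfold T in h. lra. }
 set (y0 := vadd w (vscal t0 x)).
 assert (Hy0 : y0 <> vzero).
 { intro E. unfold y0, w in E. vsimp. injection E as E1 E2.
   assert (Hx0 : x <> vzero) by (intro E; rewrite E, (nzero N HN) in Hx; lra).
   apply Hx0. destruct x as [x1 x2]; simpl in *. vsimp.
   assert (x1 * x1 + x2 * x2 = 0) by nra.
   f_equal; nra. }
 assert (Hn := npos N HN y0 Hy0).
 exists (vscal (/ N y0) y0). split.
 - rewrite (nscal N HN), Rabs_pos_eq by (left; apply Rinv_0_lt_compat; auto). field. lra.
 - intros t. rewrite !(nscal N HN).
   set (r := N y0) in *. assert (Er : r = g t0) by reflexivity. clearbody r.
   replace (vadd (vscal (/ r) y0) (vscal t x)) with (vscal (/ r) (vadd w (vscal (t0 + t * r) x))) by (unfold y0; apply veq; unfold vadd, vscal; simpl; field; lra).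
   rewrite (nscal N HN). apply Rmult_le_compat_l. apply Rabs_pos.
   eapply Rle_trans; [|apply (Hglob (t0 + t*r))]. rewrite Er; lra.
Qed.

Lemma conv_three g u v w : conv g -> u < v < w ->
  (w - u) * g v <= (w - v) * g u + (v - u) * g w.
Proof.
 intros Hc Hv.
 set (l := (w - v) / (w - u)).
 assert (Hl : 0 <= l <= 1).
 { unfold l; split. apply Rlt_le, Rdiv_lt_0_compat; lra.
   apply Rmult_le_reg_r with (w-u); [lra|]. unfold Rdiv. rewrite Rmult_assoc, Rinv_l; lra. }
 assert (E := conv_at g u w l v Hc Hl ltac:(unfold l; field; lra)).
 apply Rmult_le_compat_l with (r := w - u) in E; [|lra].
 replace ((w - u) * (l * g u + (1 - l) * g w)) with ((w - v) * g u + (v - u) * g w) in E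
   by (unfold l; field; lra). exact E.
Qed.

Lemma conv_le g a b s M : conv g -> a <= s <= b -> g a <= M -> g b <= M -> g s <= M.
Proof.
 intros Hc Hs Ha Hb.
 destruct (Req_dec s a) as [->|h1]; auto.
 destruct (Req_dec s b) as [->|h2]; auto.
 assert (E := conv_three g a s b Hc ltac:(lra)).
 assert ((b - a) * g s <= (b - a) * M) by nra.
 apply Rmult_le_reg_l with (b - a); lra.
Qed.

Lemma strict_conv (N : V -> R) (HN : is_norm N) (H : Hyp N) p q :
  N p = 1 -> N q = 1 -> N (vscal (1/2) (vadd p q)) = 1 -> p = q.
Proof.
 intros Hp Hq Hm.
 set (m := vscal (1/2) (vadd p q)) in *.
 set (d := vscal (1/2) (vadd q (vopp p))).
 destruct (Req_dec (N d) 0) as [d0|d0].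
 { apply (norm_zero _ HN) in d0. unfold d in d0. vsimp. injection d0 as e1 e2.
   apply veq; lra. }
 assert (He : 0 < N d) by (assert (h := nnn N HN d); lra).
 set (e := N d) in *. assert (Ee : N d = e) by reflexivity. clearbody e.
 set (dh := vscal (/ e) d).
 assert (Hdh : N dh = 1) by (unfold dh; rewrite (nscal N HN), Rabs_pos_eq; [rewrite Ee; field|left; apply Rinv_0_lt_compat]; lra).
 set (g := fun s => N (vadd m (vscal s dh))).
 assert (Hg : conv g) by apply line_conv, HN.
 assert (g0 : g 0 = 1) by (unfold g; rewrite <- Hm; f_equal; veqt).
 assert (ge : g e = 1).
 { unfold g. rewrite <- Hq. f_equal. unfold dh. apply veq; unfold m, d; vsimp; field; lra. }
 assert (gme : g (-e) = 1).
 { unfold g. rewrite <- Hp. f_equal. unfold dh. apply veq; unfold m, d; vsimp; field; lra. }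
 assert (Hge1 : forall s, 1 <= g s).
 { intros s. destruct (Rle_dec e s) as [h|h].
   - destruct (Req_dec s e) as [->|h']; [lra|].
     assert (E := conv_three g 0 e s Hg ltac:(lra)). nra.
   - destruct (Rle_dec 0 s) as [h2|h2].
     + destruct (Req_dec s 0) as [->|h']; [lra|].
       assert (E := conv_three g (-e) 0 s Hg ltac:(lra)). nra.
     + destruct (Rle_dec s (-e)) as [h3|h3].
       * destruct (Req_dec s (-e)) as [->|h']; [lra|].
         assert (E := conv_three g s (-e) 0 Hg ltac:(lra)). nra.
       * assert (E := conv_three g s 0 e Hg ltac:(lra)). nra. }
 assert (Hmb : birkhoff_orth N m dh).
 { intros t. rewrite Hm. exact (Hge1 t). }
 assert (Hev := birk_even N HN H dh m Hdh Hm Hmb).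
 assert (geven : forall s, g (-s) = g s).
 { intros s. unfold g.
   transitivity (N (vadd (vscal s dh) (vscal (-(1)) m))).
   - apply Nvopp_eq; auto. veqt.
   - rewrite <- Hev. f_equal. veqt. }
 assert (flat_step : forall eps, 0 < eps -> (forall s, -eps <= s <= eps -> g s = 1) ->
           (forall s, -(1+eps) <= s <= 1+eps -> g s = 1)).
 { intros eps Heps Hf.
   set (y1 := vadd m (vscal eps dh)).
   assert (Hy1 : N y1 = 1) by (apply Hf; lra).
   assert (Hb1 : birkhoff_orth N y1 dh).
   { intros t. rewrite Hy1. unfold y1.
     replace (vadd (vadd m (vscal eps dh)) (vscal t dh)) with (vadd m (vscal (eps + t) dh)) by veqt.
     apply Hge1. }
   assert (E := H dh y1 Hdh Hy1 Hb1 1 ltac:(lra)).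
   replace (vadd (vscal 1 y1) dh) with (vadd m (vscal (1 + eps) dh)) in E by (unfold y1; veqt).
   replace (vadd (vscal 1 y1) (vopp dh)) with (vadd m (vscal (- (1 - eps)) dh)) in E by (unfold y1; veqt).
   fold (g (1+eps)) in E. fold (g (-(1-eps))) in E. rewrite geven in E.
   assert (G1 : g (1 - eps) = 1).
   { destruct (Rle_dec (1 - eps) eps) as [h|h]. apply Hf; lra.
     assert (T := conv_three g eps (1-eps) (1+eps) Hg ltac:(lra)).
     rewrite (Hf eps ltac:(lra)), <- E in T. assert (h1 := Hge1 (1-eps)). nra. }
   intros s Hs. apply Rle_antisym.
   - apply (conv_le g (-(1+eps)) (1+eps) s 1 Hg Hs); [rewrite geven|]; lra.
   - apply Hge1. }
 assert (F0 : forall s, -e <= s <= e -> g s = 1).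
 { intros s Hs. apply Rle_antisym. apply (conv_le g (-e) e s 1 Hg Hs); lra. apply Hge1. }
 assert (F1 := flat_step e He F0).
 assert (F2 := flat_step (1+e) ltac:(lra) F1).
 assert (F3 := flat_step (1+(1+e)) ltac:(lra) F2).
 assert (g3 := F3 3 ltac:(lra)).
 unfold g in g3. assert (R := rev_tri N HN (vscal 3 dh) m).
 replace (vadd (vscal 3 dh) m) with (vadd m (vscal 3 dh)) in R by veqt.
 rewrite (nscal N HN), Hdh, Hm, g3, Rabs_pos_eq in R; lra.
Qed.

Lemma birk_det (N : V -> R) (HN : is_norm N) x y :
  N x = 1 -> N y = 1 -> birkhoff_orth N y x ->
  fst x * snd y - snd x * fst y <> 0.
Proof.
 intros Hx Hy Hb D.
 destruct x as [x1 x2], y as [y1 y2]; simpl in D.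
 assert (Hx0 : (x1, x2) <> vzero) by (intro E; rewrite E, (nzero N HN) in Hx; lra).
 destruct (Req_dec x1 0) as [h|h].
 - assert (x2 <> 0) by (intro; apply Hx0; subst; reflexivity).
   assert (y1 = 0) by (subst; apply Rmult_eq_reg_l with x2; nra).
   specialize (Hb (- y2 / x2)).
   replace (vadd (y1, y2) (vscal (- y2 / x2) (x1, x2))) with vzero in Hb
     by (apply veq; vsimp; subst; field; auto).
   rewrite (nzero N HN) in Hb. lra.
 - specialize (Hb (- y1 / x1)).
   replace (vadd (y1, y2) (vscal (- y1 / x1) (x1, x2))) with vzero in Hb
     by (assert (E : y2 + - y1 / x1 * x2 = (x1*y2 - x2*y1)/x1) by (field; auto);
         apply veq; vsimp; [field; auto | rewrite E, D; field; auto]).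
   rewrite (nzero N HN) in Hb. lra.
Qed.

Lemma basis_decomp x y (D : fst x * snd y - snd x * fst y <> 0) v :
  v = vadd (vscal ((fst v * snd y - snd v * fst y) / (fst x * snd y - snd x * fst y)) x)
           (vscal ((fst x * snd v - snd x * fst v) / (fst x * snd y - snd x * fst y)) y).
Proof. apply veq; vsimp; field; auto. Qed.

Lemma basis_indep x y (D : fst x * snd y - snd x * fst y <> 0) a b :
  vadd (vscal a x) (vscal b y) = vzero -> a = 0 /\ b = 0.
Proof.
 intros E. vsimp. injection E as E1 E2.
 split.
 - apply Rmult_eq_reg_r with (fst x * snd y - snd x * fst y); auto.
   transitivity (snd y * (a * fst x + b * fst y) - fst y * (a * snd x + b * snd y)); [ring|].
   rewrite E1, E2. ring.
 - apply Rmult_eq_reg_r with (fst x * snd y - snd x * fst y); auto.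
   transitivity (fst x * (a * snd x + b * snd y) - snd x * (a * fst x + b * fst y)); [ring|].
   rewrite E1, E2. ring.
Qed.

Lemma swap_unit (N : V -> R) (HN : is_norm N) (H : Hyp N) u v :
  N u = 1 -> N v = 1 -> forall s t,
  N (vadd (vscal s u) (vscal t v)) = N (vadd (vscal t u) (vscal s v)).
Proof.
 intros Hu Hv s t.
 destruct (Req_dec (N (vadd u v)) 0) as [w0|w0].
 { apply (norm_zero _ HN) in w0.
   assert (Ev : v = vopp u) by (apply veq; vsimp; injection w0; intros; lra).
   rewrite Ev.
   replace (vadd (vscal s u) (vscal t (vopp u))) with (vscal (s - t) u) by veqt.
   replace (vadd (vscal t u) (vscal s (vopp u))) with (vscal (t - s) u) by veqt.
   rewrite !(nscal N HN), Rabs_minus_sym. reflexivity. }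
 assert (Hw : 0 < N (vadd u v)) by (assert (h := nnn N HN (vadd u v)); lra).
 set (nw := N (vadd u v)) in *. assert (Enw : N (vadd u v) = nw) by reflexivity. clearbody nw.
 set (x := vscal (/ nw) (vadd u v)).
 assert (Hx : N x = 1).
 { unfold x. rewrite (nscal N HN), Enw, Rabs_pos_eq; [field|left; apply Rinv_0_lt_compat]; lra. }
 assert (Ex : vscal nw x = vadd u v) by (unfold x; apply veq; vsimp; field; lra).
 clearbody x.
 destruct (birk_exists N HN x Hx) as [y [Hy Hb]].
 assert (D := birk_det N HN x y Hx Hy Hb).
 assert (Hev := birk_even N HN H x y Hx Hy Hb).
 set (DD := fst x * snd y - snd x * fst y) in *.
 assert (Du := basis_decomp x y D u). assert (Dv := basis_decomp x y D v).
 fold DD in Du, Dv.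
 set (a := (fst u * snd y - snd u * fst y) / DD) in *.
 set (b := (fst x * snd u - snd x * fst u) / DD) in *.
 set (a' := (fst v * snd y - snd v * fst y) / DD) in *.
 set (b' := (fst x * snd v - snd x * fst v) / DD) in *.
 clearbody a b a' b'.
 assert (Hsum : vadd (vscal (a + a' - nw) x) (vscal (b + b') y) = vzero).
 { replace (vadd (vscal (a + a' - nw) x) (vscal (b + b') y)) with
     (vadd (vadd (vadd (vscal a x) (vscal b y)) (vadd (vscal a' x) (vscal b' y))) (vopp (vscal nw x))) by veqt.
   rewrite <- Du, <- Dv, Ex. veqt. }
 destruct (basis_indep x y D _ _ Hsum) as [S1 S2].
 assert (Eb : b' = - b) by lra.
 assert (Ea : a + a' = nw) by lra.
 clear Hsum S1 S2.
 set (h := fun r => N (vadd (vscal r x) (vscal (- b) y))).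
 assert (hev : forall r, h (- r) = h r).
 { intros r. unfold h. rewrite (Hev r (-b)). apply Nvopp_eq; auto. veqt. }
 assert (ha : h a = 1). { unfold h. rewrite <- Hev, <- Du. auto. }
 assert (ha' : h a' = 1). { unfold h. rewrite <- Eb, <- Dv. auto. }
 assert (habs : forall r, h (Rabs r) = h r).
 { intros r. unfold Rabs. destruct (Rcase_abs r); auto. }
 assert (Hhc : conv h).
 { intros p q l Hl. unfold h.
   replace (vadd (vscal (l * p + (1 - l) * q) x) (vscal (- b) y)) with
     (vadd (vscal (- b) y) (vscal (l * p + (1 - l) * q) x)) by veqt.
   replace (vadd (vscal p x) (vscal (- b) y)) with (vadd (vscal (- b) y) (vscal p x)) by veqt.
   replace (vadd (vscal q x) (vscal (- b) y)) with (vadd (vscal (- b) y) (vscal q x)) by veqt.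
   apply line_conv; auto. }
 assert (Habs : Rabs a = Rabs a').
 { assert (key : forall a1 a2, 0 <= a1 < a2 -> h a1 = 1 -> h a2 = 1 -> False).
   { intros a1 a2 Ha H1 H2.
     set (mid := (a1 + a2) / 2).
     assert (T := conv_three h (- a2) a1 mid Hhc ltac:(unfold mid; lra)).
     rewrite hev, H1, H2 in T.
     assert (Hm1 : 1 <= h mid) by (unfold mid in *; nra).
     assert (Hm2 : h mid <= 1) by (apply (conv_le h a1 a2 mid 1 Hhc); unfold mid; lra).
     assert (Hp := strict_conv N HN H (vadd (vscal a1 x) (vscal (- b) y)) (vadd (vscal a2 x) (vscal (- b) y)) H1 H2).
     assert (Hq : N (vscal (1 / 2) (vadd (vadd (vscal a1 x) (vscal (- b) y)) (vadd (vscal a2 x) (vscal (- b) y)))) = 1).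
     { replace (vscal (1 / 2) (vadd (vadd (vscal a1 x) (vscal (- b) y)) (vadd (vscal a2 x) (vscal (- b) y))))
         with (vadd (vscal mid x) (vscal (- b) y)) by (unfold mid; apply veq; vsimp; field).
       fold (h mid). lra. }
     specialize (Hp Hq).
     assert (Z : vadd (vscal (a1 - a2) x) (vscal 0 y) = vzero).
     { replace (vadd (vscal (a1 - a2) x) (vscal 0 y)) with
        (vadd (vadd (vscal a1 x) (vscal (- b) y)) (vopp (vadd (vscal a2 x) (vscal (- b) y)))) by veqt.
       rewrite Hp. veqt. }
     destruct (basis_indep x y D _ _ Z). lra. }
   rewrite <- habs in ha, ha'.
   assert (h1 := Rabs_pos a). assert (h2 := Rabs_pos a').
   destruct (Rtotal_order (Rabs a) (Rabs a')) as [l|[e|l]]; auto; exfalso.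
   - apply (key (Rabs a) (Rabs a')); auto.
   - apply (key (Rabs a') (Rabs a)); auto. }
 assert (Eaa : a = a').
 { unfold Rabs in Habs. destruct (Rcase_abs a), (Rcase_abs a'); lra. }
 rewrite Du, Dv, <- Eaa, Eb.
 replace (vadd (vscal s (vadd (vscal a x) (vscal b y))) (vscal t (vadd (vscal a x) (vscal (- b) y))))
   with (vadd (vscal (a * (s + t)) x) (vscal (b * (s - t)) y)) by veqt.
 replace (vadd (vscal t (vadd (vscal a x) (vscal b y))) (vscal s (vadd (vscal a x) (vscal (- b) y))))
   with (vadd (vscal (a * (s + t)) x) (vscal (- (b * (s - t))) y)) by veqt.
 apply Hev.
Qed.

Lemma main_back (N : V -> R) (HN : is_norm N) (H : Hyp N) : norm_from_inner_product N.
Proof.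
 assert (Hn10 : 0 < N (1, 0)) by (apply (npos N HN); intro E; injection E; lra).
 set (e1 := vscal (/ N (1,0)) (1,0)).
 assert (He1 : N e1 = 1).
 { unfold e1. rewrite (nscal N HN), Rabs_pos_eq; [field|left; apply Rinv_0_lt_compat]; lra. }
 clearbody e1.
 destruct (birk_exists N HN e1 He1) as [e2 [He2 Hb]].
 assert (D := birk_det N HN e1 e2 He1 He2 Hb).
 assert (Hev := birk_even N HN H e1 e2 He1 He2 Hb).
 assert (Hb2 := birk_sym N HN H e1 e2 He1 He2 Hb).
 set (f := fun a b => N (vadd (vscal a e1) (vscal b e2))).
 assert (fev : forall a b, f a (- b) = f a b) by (intros a b; unfold f; rewrite (Hev a b); reflexivity).
 assert (fsw : forall a b, f a b = f b a) by (intros; apply (swap_unit N HN H e1 e2 He1 He2)).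
 assert (fsc : forall c a b, f (c * a) (c * b) = Rabs c * f a b).
 { intros. unfold f. rewrite <- (nscal N HN). f_equal. veqt. }
 assert (fa0 : forall a, f a 0 = Rabs a).
 { intros. unfold f. replace (vadd (vscal a e1) (vscal 0 e2)) with (vscal a e1) by veqt.
   rewrite (nscal N HN), He1. ring. }
 assert (fge : forall a b, Rabs a <= f a b).
 { intros a b. destruct (Req_dec a 0) as [->|a0].
   - rewrite Rabs_R0. unfold f. apply nnn; auto.
   - replace b with (a * (b / a)) by (field; auto).
     replace a with (a * 1) at 2 by ring. rewrite fsc.
     rewrite <- (Rmult_1_r (Rabs a)) at 1. apply Rmult_le_compat_l. apply Rabs_pos.
     unfold f. replace (vadd (vscal 1 e1) (vscal (b / a) e2)) with (vadd e1 (vscal (b/a) e2)) by veqt.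
     rewrite <- He1 at 1. apply Hb2. }
 assert (fabs : forall a b, f a (Rabs b) = f a b).
 { intros. unfold Rabs. destruct (Rcase_abs b); auto. }
 assert (fconv : forall a, conv (f a)).
 { intros a p q l Hl. unfold f.
   replace (vadd (vscal a e1) (vscal (l * p + (1 - l) * q) e2)) with
     (vadd (vscal a e1) (vscal (l * p + (1 - l) * q) e2)) by reflexivity.
   apply line_conv; auto. }
 assert (key : forall a b, f a b = 1 -> a * a + b * b = 1).
 { intros a b Hab.
   destruct (Req_dec b 0) as [->|b0].
   { rewrite fa0 in Hab. unfold Rabs in Hab. destruct (Rcase_abs a); nra. }
   set (v := vadd (vscal a e1) (vscal b e2)).
   assert (Hv : N v = 1) by exact Hab.
   assert (S := swap_unit N HN H e1 v He1 Hv 1 (- a)).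
   replace (vadd (vscal 1 e1) (vscal (- a) v)) with (vadd (vscal (1 - a * a) e1) (vscal (- (a * b)) e2)) in S by (unfold v; veqt).
   replace (vadd (vscal (- a) e1) (vscal 1 v)) with (vadd (vscal 0 e1) (vscal b e2)) in S by (unfold v; veqt).
   fold (f (1 - a * a) (- (a * b))) in S. fold (f 0 b) in S.
   rewrite fev in S. rewrite (fsw 0 b), fa0 in S.
   assert (Hb0 : 0 < Rabs b) by (apply Rabs_pos_lt; auto).
   set (c0 := (1 - a * a) / Rabs b).
   assert (Hc0 : f a c0 = 1).
   { rewrite fsw. 
     assert (E := fsc (/ Rabs b) (1 - a * a) (a * b)). rewrite S in E.
     rewrite (Rabs_pos_eq (/ Rabs b)) in E by (left; apply Rinv_0_lt_compat; auto).
     rewrite Rinv_l in E by lra.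
     unfold c0. replace ((1 - a * a) / Rabs b) with (/ Rabs b * (1 - a * a)) by (field; lra).
     etransitivity; [|exact E]. set (cc := / Rabs b * (1 - a * a)). clearbody cc.
     unfold Rabs. destruct (Rcase_abs b).
     - rewrite <- fev. f_equal. field. lra.
     - f_equal. field. lra. }
   assert (Hbb : f a (Rabs b) = 1) by (rewrite fabs; auto).
   destruct (Rlt_dec (Rabs a) 1) as [ha|ha].
   - assert (ca : 0 < c0).
     { unfold c0. apply Rdiv_lt_0_compat; auto. unfold Rabs in ha. destruct (Rcase_abs a); nra. }
     assert (E : c0 = Rabs b).
     { destruct (Rtotal_order c0 (Rabs b)) as [l|[e|l]]; auto; exfalso.
       - assert (T := conv_three (f a) 0 c0 (Rabs b) (fconv a) ltac:(lra)).
         rewrite fa0, Hc0, Hbb in T. nra.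
       - assert (T := conv_three (f a) 0 (Rabs b) c0 (fconv a) ltac:(lra)).
         rewrite fa0, Hc0, Hbb in T. nra. }
     unfold c0 in E. 
     apply (Rmult_eq_compat_r (Rabs b)) in E. unfold Rdiv in E.
     rewrite Rmult_assoc, Rinv_l, Rmult_1_r in E by lra.
     assert (Rabs b * Rabs b = b * b) by (unfold Rabs; destruct (Rcase_abs b); ring).
     lra.
   - exfalso.
     assert (ha1 : Rabs a = 1) by (assert (h := fge a b); lra).
     assert (Hmid : f a (Rabs b / 2) = 1).
     { apply Rle_antisym.
       - apply (conv_le (f a) 0 (Rabs b) (Rabs b / 2) 1 (fconv a)); [lra | rewrite fa0 | ]; lra.
       - rewrite <- ha1. apply fge. }
     assert (P := strict_conv N HN H (vadd (vscal a e1) (vscal 0 e2)) (vadd (vscal a e1) (vscal (Rabs b) e2))).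
     assert (Z : vadd (vscal a e1) (vscal 0 e2) = vadd (vscal a e1) (vscal (Rabs b) e2)).
     { apply P.
       - fold (f a 0). rewrite fa0. auto.
       - exact Hbb.
       - replace (vscal (1 / 2) (vadd (vadd (vscal a e1) (vscal 0 e2)) (vadd (vscal a e1) (vscal (Rabs b) e2))))
           with (vadd (vscal a e1) (vscal (Rabs b / 2) e2)) by (apply veq; vsimp; field).
         exact Hmid. }
     assert (Z2 : vadd (vscal 0 e1) (vscal (Rabs b) e2) = vzero).
     { replace (vadd (vscal 0 e1) (vscal (Rabs b) e2)) with
         (vadd (vadd (vscal a e1) (vscal (Rabs b) e2)) (vopp (vadd (vscal a e1) (vscal 0 e2)))) by veqt.
       rewrite <- Z. veqt. }
     destruct (basis_indep e1 e2 D _ _ Z2). lra. }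
 assert (fsq : forall a b, f a b * f a b = a * a + b * b).
 { intros a b.
   destruct (Req_dec (f a b) 0) as [z|z].
   - unfold f in z. apply (norm_zero _ HN) in z. destruct (basis_indep e1 e2 D _ _ z) as [-> ->].
     unfold f. replace (vadd (vscal 0 e1) (vscal 0 e2)) with vzero by veqt. rewrite (nzero N HN). ring.
   - assert (hp : 0 < f a b) by (assert (h := nnn N HN (vadd (vscal a e1) (vscal b e2))); fold (f a b) in h; lra).
     set (r := f a b) in *. assert (Er : f a b = r) by reflexivity. clearbody r.
     assert (E := fsc (/ r) a b). rewrite Er, Rabs_pos_eq, Rinv_l in E by (try left; try apply Rinv_0_lt_compat; lra).
     apply key in E.
     assert (E2 : (/r * a) * (/r * a) + (/r * b) * (/r * b) = / r * / r * (a * a + b * b)) by ring.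
     rewrite E2 in E.
     apply (Rmult_eq_compat_l (r * r)) in E.
     replace (r * r * (/ r * / r * (a * a + b * b))) with (a * a + b * b) in E by (field; lra).
     lra. }
 set (DD := fst e1 * snd e2 - snd e1 * fst e2) in *.
 set (ca := fun v : V => (fst v * snd e2 - snd v * fst e2) / DD).
 set (cb := fun v : V => (fst e1 * snd v - snd e1 * fst v) / DD).
 assert (dec : forall v, v = vadd (vscal (ca v) e1) (vscal (cb v) e2)) by (intros v; apply (basis_decomp e1 e2 D v)).
 exists (fun u v => ca u * ca v + cb u * cb v). split.
 - split.
   + intros. ring.
   + intros. unfold ca, cb. vsimp. field. auto.
   + intros. unfold ca, cb. vsimp. field. auto.
   + intros v Hv.
     destruct (Req_dec (ca v) 0) as [h1|h1]; [destruct (Req_dec (cb v) 0) as [h2|h2]|].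
     * exfalso. apply Hv. rewrite (dec v), h1, h2. veqt.
     * nra.
     * nra.
 - intros v. rewrite (dec v) at 1. fold (f (ca v) (cb v)).
   rewrite <- fsq. rewrite sqrt_square; auto. unfold f. apply nnn; auto.
Qed.

Lemma main_fwd (N : V -> R) (HN : is_norm N) : norm_from_inner_product N ->
  (forall x y : V,
     unit_circle N x -> unit_circle N y -> birkhoff_orth N y x ->
     forall z : V, in_segment (vopp y) y z -> bisector N (vopp x) x z).
Proof.
 intros [B [HB HNB]] x y Hx Hy Hb z [s [Hs Hz]].
 unfold unit_circle in *.
 assert (Badd_r : forall u v w, B u (vadd v w) = B u v + B u w).
 { intros. rewrite (ip_sym _ HB), (ip_add_l _ HB), (ip_sym _ HB u v), (ip_sym _ HB u w). auto. }
 assert (Bscal_r : forall t u v, B u (vscal t v) = t * B u v).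
 { intros. rewrite (ip_sym _ HB), (ip_scal_l _ HB), (ip_sym _ HB). auto. }
 assert (Bnn : forall v, 0 <= B v v).
 { intros v. destruct (classic (v = vzero)) as [->|h].
   - replace vzero with (vscal 0 vzero) by veqt. rewrite (ip_scal_l _ HB). lra.
   - left. apply (ip_pos _ HB); auto. }
 assert (Nsq : forall v, N v * N v = B v v) by (intros; rewrite HNB; apply sqrt_sqrt; auto).
 assert (expand : forall c u w, B (vadd (vscal c u) w) (vadd (vscal c u) w) =
            c * c * B u u + 2 * c * B u w + B w w).
 { intros. rewrite (ip_add_l _ HB), !Badd_r, !(ip_scal_l _ HB), !Bscal_r, (ip_sym _ HB w u). ring. }
 set (b := B x y).
 assert (Hb0 : b = 0).
 { specialize (Hb (- b)).
   assert (E := expand (- b) x y).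
   replace (vadd (vscal (- b) x) y) with (vadd y (vscal (- b) x)) in E by veqt.
   rewrite <- Nsq, <- Nsq, <- Nsq, Hx, Hy in E.
   assert (h := nnn N HN (vadd y (vscal (- b) x))).
   rewrite Hy in Hb. fold b in E. nra. }
 unfold bisector. rewrite !HNB. f_equal.
 replace z with (vscal (2 * s - 1) y) by (rewrite Hz; veqt).
 replace (vadd (vscal (2 * s - 1) y) (vopp (vopp x))) with (vadd (vscal (2 * s - 1) y) x) by veqt.
 replace (vadd (vscal (2 * s - 1) y) (vopp x)) with (vadd (vscal (2 * s - 1) y) (vscal (-1) x)) by veqt.
 rewrite !expand, !Bscal_r, !(ip_scal_l _ HB), (ip_sym _ HB y x). fold b. rewrite Hb0.
 ring.
Qed.

Theorem proposition3p2 (N : V -> R) (HN : is_norm N) :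
  norm_from_inner_product N <->
  (forall x y : V,
     unit_circle N x -> unit_circle N y -> birkhoff_orth N y x ->
     forall z : V, in_segment (vopp y) y z -> bisector N (vopp x) x z).
Proof.
 split.
 - apply main_fwd; auto.
 - intros Hst. apply main_back; auto.
   intros x y Hx Hy Hb c Hc.
   assert (Hseg : in_segment (vopp y) y (vscal c y)).
   { exists ((c + 1) / 2). split. lra. apply veq; vsimp; field. }
   assert (E := Hst x y Hx Hy Hb (vscal c y) Hseg).
   unfold bisector in E.
   replace (vopp (vopp x)) with x in E by veqt. exact E.
Qed.
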